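(* Let $m,n,n_i,r$ be positive integers with $n_i\le n$, $\rho>0$, $\lambda>0$, $M_i\in\mathbb R^{m\times n_i}$. For $U\in\mathbb R^{m\times r}$, $V\in\mathbb R^{n_i\times r}$, $S\in\mathbb R^{m\times n_i}$ let $$\mathcal L_i(U,V,S)=\frac12\|UV^T+S-M_i\|_F^2+\frac{\rho}{2}\Big(\|V\|_F^2+\frac{n_i}{n}\|U\|_F^2\Big)+\lambda\|S\|_1,$$ and $g_i(U)=\inf_{V,S}\mathcal L_i(U,V,S)$. Assume the standing boundedness assumption described in the context. Then $g_i$ is differentiable and, for every $U$, $$\nabla_U g_i(U)=\nabla_U\mathcal L_i(U,V_i^*,S_i^* ),$$ where $(V_i^*,S_i^* )=\arg\min_{V,S}\mathcal L_i(U,V,S)$ is the (unique) minimizer for this $U$.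
   Context: $\|S\|_1=\sum_{jk}|S_{jk}|$. Standing assumption (bounded variables): there are constants $C_U,C_V,C_S,C_M$ such that all matrices considered satisfy $\|U\|_F\le C_U$, $\|V\|_F\le C_V$, $\|S\|_F\le C_S$, $\|M_i\|_F\le C_M$ (in particular the minimizers $V_i^*,S_i^*$ obey these bounds). *)

(* Defs.v *)
From HB Require Import structures.
From mathcomp Require Import all_boot all_order all_algebra.
From mathcomp Require Import all_classical all_reals all_analysis.
Set Implicit Arguments. Unset Strict Implicit. Unset Printing Implicit Defensive.
Import Order.TTheory GRing.Theory Num.Theory.
Import numFieldNormedType.Exports.
Local Open Scope ring_scope.
Local Open Scope classical_set_scope.

Definition frob {R : realType} {p q : nat} (A : 'M[R]_(p, q)) : R :=
  Num.sqrt (\sum_(i < p) \sum_(j < q) A i j ^+ 2).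

Definition l1norm {R : realType} {p q : nat} (A : 'M[R]_(p, q)) : R :=
  \sum_(i < p) \sum_(j < q) `|A i j|.

Definition frob_inner {R : realType} {p q : nat} (G H : 'M[R]_(p, q)) : R :=
  \sum_(i < p) \sum_(j < q) G i j * H i j.

Definition Lobj {R : realType} {m n ni r : nat} (rho lam : R) (M : 'M[R]_(m, ni))
  (U : 'M[R]_(m, r)) (V : 'M[R]_(ni, r)) (S : 'M[R]_(m, ni)) : R :=
  2^-1 * frob (U *m V^T + S - M) ^+ 2
  + rho / 2 * (frob V ^+ 2 + ni%:R / n%:R * frob U ^+ 2)
  + lam * l1norm S.

Definition gfun {R : realType} {m n ni r : nat} (rho lam : R) (M : 'M[R]_(m, ni))
  (U : 'M[R]_(m, r)) : R :=
  inf (range (fun VS : 'M[R]_(ni, r) * 'M[R]_(m, ni) =>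
         @Lobj R m n ni r rho lam M U VS.1 VS.2)).

Definition is_minimizer {R : realType} {m n ni r : nat} (rho lam : R) (M : 'M[R]_(m, ni))
  (U : 'M[R]_(m, r)) (V : 'M[R]_(ni, r)) (S : 'M[R]_(m, ni)) : Prop :=
  forall V' S', @Lobj R m n ni r rho lam M U V S <= @Lobj R m n ni r rho lam M U V' S'.

Definition is_gradient {R : realType} {p q : nat} (f : 'M[R]_(p, q) -> R)
  (U G : 'M[R]_(p, q)) : Prop :=
  differentiable f U /\ forall H, 'd f U H = frob_inner G H.

(* Main.v *)
Require Import Defs.
From HB Require Import structures.
From mathcomp Require Import all_boot all_order all_algebra.
From mathcomp Require Import all_classical all_reals all_analysis.
From mathcomp Require Import ring lra.
Import Order.TTheory GRing.Theory Num.Theory.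
Import numFieldNormedType.Exports.
Local Open Scope ring_scope.
Set Implicit Arguments. Unset Strict Implicit. Unset Printing Implicit Defensive.
Section Alg.
Variable R : realType.

Definition qn {p q} (A : 'M[R]_(p,q)) : R := frob_inner A A.

Lemma ipC p q (A B : 'M[R]_(p,q)) : frob_inner A B = frob_inner B A.
Proof. by apply eq_bigr => i _; apply eq_bigr => j _; rewrite mulrC. Qed.

Lemma ipDl p q (A B C : 'M[R]_(p,q)) :
  frob_inner (A + B) C = frob_inner A C + frob_inner B C.
Proof.
rewrite /frob_inner -big_split; apply eq_bigr => i _.
rewrite -big_split; apply eq_bigr => j _ /=; by rewrite !mxE mulrDl.
Qed.

Lemma ipZl p q (a : R) (A C : 'M[R]_(p,q)) :
  frob_inner (a *: A) C = a * frob_inner A C.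
Proof.
rewrite /frob_inner mulr_sumr; apply eq_bigr => i _.
rewrite mulr_sumr; apply eq_bigr => j _ /=; by rewrite !mxE mulrA.
Qed.

Lemma ipNl p q (A C : 'M[R]_(p,q)) : frob_inner (- A) C = - frob_inner A C.
Proof. by rewrite -scaleN1r ipZl mulN1r. Qed.

Lemma ipBl p q (A B C : 'M[R]_(p,q)) :
  frob_inner (A - B) C = frob_inner A C - frob_inner B C.
Proof. by rewrite ipDl ipNl. Qed.

Lemma ipDr p q (A B C : 'M[R]_(p,q)) :
  frob_inner C (A + B) = frob_inner C A + frob_inner C B.
Proof. by rewrite ipC ipDl !(ipC C). Qed.
Lemma ipZr p q (a : R) (A C : 'M[R]_(p,q)) :
  frob_inner C (a *: A) = a * frob_inner C A.
Proof. by rewrite ipC ipZl ipC. Qed.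
Lemma ipNr p q (A C : 'M[R]_(p,q)) : frob_inner C (- A) = - frob_inner C A.
Proof. by rewrite ipC ipNl ipC. Qed.
Lemma ipBr p q (A B C : 'M[R]_(p,q)) :
  frob_inner C (A - B) = frob_inner C A - frob_inner C B.
Proof. by rewrite ipDr ipNr. Qed.

Lemma ip0l p q (C : 'M[R]_(p,q)) : frob_inner 0 C = 0.
Proof. by rewrite -(scale0r 0) ipZl mul0r. Qed.
Lemma ip0r p q (C : 'M[R]_(p,q)) : frob_inner C 0 = 0.
Proof. by rewrite ipC ip0l. Qed.

Lemma qn_ge0 p q (A : 'M[R]_(p,q)) : 0 <= qn A.
Proof. by apply: sumr_ge0 => i _; apply: sumr_ge0 => j _; rewrite -expr2 sqr_ge0. Qed.

Lemma qn_eq0 p q (A : 'M[R]_(p,q)) : qn A = 0 -> A = 0.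
Proof.
move=> h; apply/matrixP => i j; rewrite mxE.
have h1 : forall i, 0 <= \sum_j A i j * A i j.
  by move=> i'; apply: sumr_ge0 => j' _; rewrite -expr2 sqr_ge0.
move/eqP: h; rewrite /qn /frob_inner psumr_eq0 // => /allP /(_ i (mem_index_enum _)).
rewrite psumr_eq0 => [/allP /(_ j (mem_index_enum _))|]; last by move=> j' _; rewrite -expr2 sqr_ge0.
by rewrite mulf_eq0 orbb => /eqP.
Qed.

Lemma frob_sq p q (A : 'M[R]_(p,q)) : frob A ^+ 2 = qn A.
Proof.
rewrite /frob sqr_sqrtr; last first.
  by apply: sumr_ge0 => i _; apply: sumr_ge0 => j _; rewrite sqr_ge0.
by rewrite /qn /frob_inner; apply eq_bigr => i _; apply eq_bigr => j _; rewrite expr2.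
Qed.

Lemma qnD p q (A B : 'M[R]_(p,q)) :
  qn (A + B) = qn A + 2 * frob_inner A B + qn B.
Proof. rewrite /qn !ipDl !ipDr (ipC B A); ring. Qed.
Lemma qnB p q (A B : 'M[R]_(p,q)) :
  qn (A - B) = qn A - 2 * frob_inner A B + qn B.
Proof. rewrite /qn !ipBl !ipBr (ipC B A); ring. Qed.
Lemma qnZ p q (a : R) (A : 'M[R]_(p,q)) : qn (a *: A) = a ^+ 2 * qn A.
Proof. rewrite /qn ipZl ipZr; ring. Qed.
Lemma qnN p q (A : 'M[R]_(p,q)) : qn (- A) = qn A.
Proof. rewrite /qn ipNl ipNr; ring. Qed.
Lemma qn0 p q : qn (0 : 'M[R]_(p,q)) = 0.
Proof. by rewrite /qn ip0l. Qed.

Lemma young p q (a : R) (A B : 'M[R]_(p,q)) : 0 < a ->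
  `|frob_inner A B| <= a * qn A + qn B / (4 * a).
Proof.
move=> a0.
have h1 := qn_ge0 ((2 * a) *: A - B).
have h2 := qn_ge0 ((2 * a) *: A + B).
rewrite qnB qnZ ipZl in h1; rewrite qnD qnZ ipZl in h2.
have qA := qn_ge0 A; have qB := qn_ge0 B.
have e : a * qn A + qn B / (4 * a) = ((2 * a) ^+ 2 * qn A + qn B) / (4 * a).
  by field; rewrite lt0r_neq0.
rewrite e ler_pdivlMr ?mulr_gt0 //.
move: h1 h2; set x := frob_inner A B => h1 h2.
have [x0|x0] := lerP 0 x; [rewrite ger0_norm // | rewrite ltr0_norm //]; nra.
Qed.

Lemma ipM_r p q s (A : 'M[R]_(p,q)) (B : 'M[R]_(q,s)) C :
  frob_inner (A *m B) C = frob_inner A (C *m B^T).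
Proof.
rewrite /frob_inner; apply eq_bigr => i _.
under eq_bigr do rewrite mxE mulr_suml.
rewrite exchange_big; apply eq_bigr => k _; rewrite mxE mulr_sumr.
by apply eq_bigr => j _; rewrite !mxE; ring.
Qed.

Lemma ip_tr p q (A B : 'M[R]_(p,q)) : frob_inner A^T B^T = frob_inner A B.
Proof.
rewrite /frob_inner exchange_big; apply eq_bigr => i _; apply eq_bigr => j _.
by rewrite !mxE.
Qed.

Lemma ipM_l p q s (A : 'M[R]_(p,q)) (B : 'M[R]_(q,s)) C :
  frob_inner (A *m B) C = frob_inner B (A^T *m C).
Proof.
by rewrite -ip_tr trmx_mul ipM_r trmxK -[RHS]ip_tr trmx_mul trmxK.
Qed.

Lemma qn_tr p q (A : 'M[R]_(p,q)) : qn A^T = qn A.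
Proof.
rewrite /qn /frob_inner exchange_big; apply eq_bigr => i _; apply eq_bigr => j _.
by rewrite !mxE.
Qed.

Lemma cs p q (A B : 'M[R]_(p,q)) : frob_inner A B ^+ 2 <= qn A * qn B.
Proof.
have [B0|] := eqVneq (qn B) 0.
  by rewrite B0 mulr0 (qn_eq0 B0) ip0r expr0n.
move=> Bn0; have Bp : 0 < qn B by rewrite lt_def Bn0 qn_ge0.
set t := frob_inner A B / qn B.
have h := qn_ge0 (A - t *: B).
rewrite qnB qnZ ipZr /t in h.
rewrite -ler_pdivrMr //.
have e : qn A - 2 * (frob_inner A B / qn B * frob_inner A B) +
      (frob_inner A B / qn B) ^+ 2 * qn B = qn A - frob_inner A B ^+ 2 / qn B.
  by field.
by rewrite e subr_ge0 in h.
Qed.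

Lemma qn_row1 q (a : 'M[R]_(1,q)) : qn a = \sum_j a ord0 j ^+ 2.
Proof. by rewrite /qn /frob_inner big_ord1; apply eq_bigr => j _; rewrite expr2. Qed.

Lemma qnM p q s (A : 'M[R]_(p,q)) (B : 'M[R]_(q,s)) : qn (A *m B) <= qn A * qn B.
Proof.
have e1 i j : (A *m B) i j = frob_inner (row i A) (col j B)^T.
  rewrite mxE /frob_inner big_ord1; apply eq_bigr => k _; by rewrite !mxE.
have le1 : qn (A *m B) <= \sum_i \sum_j (qn (row i A) * qn (col j B)^T).
  apply: ler_sum => i _; apply: ler_sum => j _; rewrite -expr2 e1; exact: cs.
apply: (le_trans le1); rewrite /qn.
have eA : frob_inner A A = \sum_i qn (row i A).
  rewrite /qn /frob_inner; apply eq_bigr => i _; rewrite big_ord1.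
  by apply eq_bigr => j _; rewrite !mxE.
have eB : frob_inner B B = \sum_j qn (col j B)^T.
  rewrite /frob_inner exchange_big; apply eq_bigr => j _; rewrite qn_tr /qn /frob_inner.
  by apply eq_bigr => i _; rewrite big_ord1 !mxE.
rewrite eA eB mulr_suml; apply: ler_sum => i _; rewrite mulr_sumr.
by apply: ler_sum => j _.
Qed.

Lemma l1_ge0 p q (A : 'M[R]_(p,q)) : 0 <= l1norm A.
Proof. by apply: sumr_ge0 => i _; apply: sumr_ge0 => j _. Qed.

Lemma l1_mid p q (A B : 'M[R]_(p,q)) :
  2 * l1norm (2^-1 *: (A + B)) <= l1norm A + l1norm B.
Proof.
rewrite /l1norm -big_split mulr_sumr; apply: ler_sum => i _.
rewrite -big_split mulr_sumr; apply: ler_sum => j _ /=.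
rewrite !mxE normrM ger0_norm // mulrA divff // mul1r; exact: ler_normD.
Qed.

Lemma entry_le_l1 p q (A : 'M[R]_(p,q)) i j : `|A i j| <= l1norm A.
Proof.
rewrite /l1norm (bigD1 i) //= (bigD1 j) //= -addrA lerDl.
apply: addr_ge0; first by apply: sumr_ge0.
by apply: sumr_ge0 => *; apply: sumr_ge0.
Qed.

Lemma entry_sq_le_qn p q (A : 'M[R]_(p,q)) i j : A i j ^+ 2 <= qn A.
Proof.
rewrite /qn /frob_inner (bigD1 i) //= (bigD1 j) //= -addrA expr2 lerDl.
apply: addr_ge0; first by apply: sumr_ge0 => *; rewrite -expr2 sqr_ge0.
by apply: sumr_ge0 => *; apply: sumr_ge0 => *; rewrite -expr2 sqr_ge0.
Qed.

End Alg.
Section Obj.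
Variables (R : realType) (m n ni r : nat) (rho lam : R) (M : 'M[R]_(m, ni)).
Hypotheses (hrho : 0 < rho) (hlam : 0 < lam).

Definition cc : R := ni%:R / n%:R.
Lemma cc_ge0 : 0 <= cc.
Proof. by rewrite /cc divr_ge0. Qed.

Definition Rs (U : 'M[R]_(m, r)) (V : 'M[R]_(ni, r)) (S : 'M[R]_(m, ni)) :=
  U *m V^T + S - M.

Definition Fq (U : 'M[R]_(m, r)) (V : 'M[R]_(ni, r)) (S : 'M[R]_(m, ni)) : R :=
  2^-1 * qn (Rs U V S) + rho / 2 * (qn V + cc * qn U) + lam * l1norm S.

Lemma Lobj_Fq U V S : @Lobj R m n ni r rho lam M U V S = Fq U V S.
Proof. by rewrite /Lobj /Fq /Rs !frob_sq. Qed.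

Definition Gr U V S : 'M[R]_(m, r) := Rs U V S *m V + (rho * cc) *: U.

Lemma Fq_expand U H V S :
  Fq (U + H) V S = Fq U V S + frob_inner (Gr U V S) H
     + 2^-1 * qn (H *m V^T) + rho * cc / 2 * qn H.
Proof.
have e : Rs (U + H) V S = Rs U V S + H *m V^T.
  rewrite /Rs mulmxDl.
  move: (U *m V^T) (H *m V^T) => P Q.
  by apply/matrixP => i j; rewrite !mxE; ring.
rewrite /Fq e qnD qnD /Gr (ipDl (Rs U V S *m V)) ipZl.
rewrite (ipC (Rs U V S)) ipM_r trmxK (ipC (Rs U V S *m V)).
by field.
Qed.

Lemma Fq_sc U V1 S1 V2 S2 :
  4^-1 * qn (Rs U V1 S1 - Rs U V2 S2) + rho / 4 * qn (V1 - V2) <=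
  Fq U V1 S1 + Fq U V2 S2
    - 2 * Fq U (2^-1 *: (V1 + V2)) (2^-1 *: (S1 + S2)).
Proof.
have eR : Rs U (2^-1 *: (V1 + V2)) (2^-1 *: (S1 + S2)) =
          2^-1 *: (Rs U V1 S1 + Rs U V2 S2).
  rewrite /Rs linearZ /= -scalemxAr linearD /= mulmxDr.
  move: (U *m V1^T) (U *m V2^T) => P Q.
  by apply/matrixP => i j; rewrite !mxE; field.
rewrite /Fq eR !qnZ (qnD (Rs U V1 S1) (Rs U V2 S2)) (qnD V1 V2) (qnB (Rs U V1 S1)) (qnB V1).
have hl := l1_mid S1 S2.
set a := qn (Rs U V1 S1). set b := qn (Rs U V2 S2).
set x := frob_inner (Rs U V1 S1) (Rs U V2 S2).
set a' := qn V1. set b' := qn V2. set y := frob_inner V1 V2.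
set l := l1norm (2^-1 *: (S1 + S2)).
have e2 : (2^-1 : R) ^+ 2 = 4^-1 by field.
rewrite e2.
have : 0 <= lam * (l1norm S1 + l1norm S2 - 2 * l).
  by apply: mulr_ge0; [exact: ltW | rewrite subr_ge0].
move=> h.
have -> : 4^-1 * (a - 2 * x + b) + rho / 4 * (a' - 2 * y + b') =
  2^-1 * a + rho / 2 * (a' + cc * qn U) + lam * l1norm S1 +
  (2^-1 * b + rho / 2 * (b' + cc * qn U) + lam * l1norm S2) -
  2 * (2^-1 * (4^-1 * (a + 2 * x + b)) + rho / 2 * (4^-1 * (a' + 2 * y + b') + cc * qn U) +
     lam * l) - lam * (l1norm S1 + l1norm S2 - 2 * l).
  by field.
by rewrite lerBlDr lerDl.
Qed.

End Obj.
Section Cont.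
Variable R : realType.

Lemma cont_sum (T : topologicalType) (I : finType) (f : I -> T -> R) :
  (forall i, continuous (f i)) -> continuous (fun x => \sum_i f i x).
Proof.
move=> hf.
suff : forall s : seq I, continuous (fun x => \sum_(i <- s) f i x) by apply.
elim=> [|a s IH].
  have -> : (fun x : T => \sum_(i <- [::]) f i x) = fun=> 0.
    by apply: boolp.funext => x; rewrite big_nil.
  exact: cst_continuous.
have -> : (fun x : T => \sum_(i <- a :: s) f i x) = (f a) + (fun x => \sum_(i <- s) f i x).
  by apply: boolp.funext => x; rewrite big_cons.
by move=> x; apply: continuousD; [exact: hf | exact: IH].
Qed.

Lemma cont_mul (T : topologicalType) (f g : T -> R) :
  continuous f -> continuous g -> continuous (fun x => f x * g x).
Proof. by move=> hf hg x; apply: (continuousM (hf x) (hg x)). Qed.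

Lemma cont_add (T : topologicalType) (f g : T -> R) :
  continuous f -> continuous g -> continuous (fun x => f x + g x).
Proof. by move=> hf hg x; apply: (continuousD (hf x) (hg x)). Qed.

Lemma cont_opp (T : topologicalType) (f : T -> R) :
  continuous f -> continuous (fun x => - f x).
Proof. by move=> hf x; apply: (continuousN (hf x)). Qed.

Lemma cont_abs (T : topologicalType) (f : T -> R) :
  continuous f -> continuous (fun x => `|f x|).
Proof.
move=> hf x; apply: (continuous_comp (hf x)); exact: norm_continuous.
Qed.

Lemma cont_cst (T : topologicalType) (a : R) : continuous (fun _ : T => a).
Proof. exact: cst_continuous. Qed.

Lemma cont_qn (T : topologicalType) p q (F : T -> 'M[R]_(p, q)) :
  (forall i j, continuous (fun x => F x i j)) -> continuous (fun x => qn (F x)).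
Proof.
move=> hF; apply: cont_sum => i; apply: cont_sum => j; exact: cont_mul.
Qed.

Lemma cont_l1 (T : topologicalType) p q (F : T -> 'M[R]_(p, q)) :
  (forall i j, continuous (fun x => F x i j)) -> continuous (fun x => l1norm (F x)).
Proof.
move=> hF; apply: cont_sum => i; apply: cont_sum => j; exact: cont_abs.
Qed.

End Cont.

Section Exist.
Variables (R : realType) (m n ni r : nat) (rho lam : R) (M : 'M[R]_(m, ni)).
Hypotheses (hrho : 0 < rho) (hlam : 0 < lam).
Local Notation N := (ni * r + m * ni)%N.
Local Notation FF := (Fq n rho lam M).

Definition Vof (w : 'rV[R]_N) : 'M[R]_(ni, r) :=
  \matrix_(i, j) w ord0 (lshift (m * ni) (mxvec_index i j)).
Definition Sof (w : 'rV[R]_N) : 'M[R]_(m, ni) :=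
  \matrix_(i, j) w ord0 (rshift (ni * r) (mxvec_index i j)).
Definition enc (V : 'M[R]_(ni, r)) (S : 'M[R]_(m, ni)) : 'rV[R]_N :=
  row_mx (mxvec V) (mxvec S).

Lemma VofK V S : Vof (enc V S) = V.
Proof. by apply/matrixP => i j; rewrite mxE row_mxEl mxvecE. Qed.
Lemma SofK V S : Sof (enc V S) = S.
Proof. by apply/matrixP => i j; rewrite mxE row_mxEr mxvecE. Qed.

Lemma abs_le_sq (x : R) : `|x| <= 1 + x ^+ 2.
Proof.
have [x0|x0] := lerP 0 x; [rewrite ger0_norm // | rewrite ltr0_norm //]; nra.
Qed.

Lemma Fq_ge_V (U : 'M[R]_(m, r)) (V : 'M[R]_(ni, r)) (S : 'M[R]_(m, ni)) : rho / 2 * qn V <= FF U V S.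
Proof.
rewrite /Fq.
have h1 := qn_ge0 (Rs M U V S); have h2 := qn_ge0 U; have h3 := l1_ge0 S.
have h4 := cc_ge0 R n ni.
have : 0 <= rho / 2 * (cc R n ni * qn U) by apply: mulr_ge0; [apply: divr_ge0; [exact: ltW|] | exact: mulr_ge0].
have : 0 <= lam * l1norm S by apply: mulr_ge0 => //; exact: ltW.
move=> *; rewrite mulrDr; lra.
Qed.

Lemma Fq_ge_S (U : 'M[R]_(m, r)) (V : 'M[R]_(ni, r)) (S : 'M[R]_(m, ni)) : lam * l1norm S <= FF U V S.
Proof.
rewrite /Fq.
have h1 := qn_ge0 (Rs M U V S); have h2 := qn_ge0 U; have h3 := qn_ge0 V.
have h4 := cc_ge0 R n ni.
have : 0 <= rho / 2 * (qn V + cc R n ni * qn U).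
  by apply: mulr_ge0; [apply: divr_ge0; [exact: ltW|] | apply: addr_ge0 => //; exact: mulr_ge0].
move=> *; lra.
Qed.

Lemma Fq_ge0 (U : 'M[R]_(m, r)) (V : 'M[R]_(ni, r)) (S : 'M[R]_(m, ni)) : 0 <= FF U V S.
Proof.
apply: le_trans (Fq_ge_S U V S); apply: mulr_ge0; [exact: ltW | exact: l1_ge0].
Qed.

Lemma exists_min (U : 'M[R]_(m, r)) : exists VS : 'M[R]_(ni, r) * 'M[R]_(m, ni),
  forall V' S', FF U VS.1 VS.2 <= FF U V' S'.
Proof.
set F0 := FF U 0 0.
have F00 : 0 <= F0 by exact: Fq_ge0.
set B := 1 + 2 * F0 / rho + F0 / lam.
have B0 : 0 <= B.
  rewrite /B; apply: addr_ge0; [apply: addr_ge0 => //|].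
    by apply: divr_ge0; [apply: mulr_ge0 | exact: ltW].
  by apply: divr_ge0 => //; exact: ltW.
set K := [set w : 'rV[R]_N | forall k, (`[- B, B])%classic (w ord0 k)]%classic.
have Kc : compact K.
  by apply: (@rV_compact _ _ (fun=> `[- B, B]%classic)) => _; exact: segment_compact.
have K0 : K (enc 0 0).
  move=> k /=; rewrite in_itv /= -ler_norml.
  rewrite -(splitK k); case: (fintype.split k) => k' /=; [rewrite row_mxEl | rewrite row_mxEr];
    case: (mxvec_indexP k') => i j; rewrite mxvecE mxE normr0 //.
have Kne : (K !=set0)%classic by exists (enc 0 0).
set Phi := fun w : 'rV[R]_N => FF U (Vof w) (Sof w).
have ceV : forall i j, continuous (fun w : 'rV[R]_N => Vof w i j).
  move=> i j; have -> : (fun w : 'rV[R]_N => Vof w i j) =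
     (fun w => w ord0 (lshift (m * ni) (mxvec_index i j))).
    by apply: boolp.funext => w; rewrite mxE.
  exact: coord_continuous.
have ceS : forall i j, continuous (fun w : 'rV[R]_N => Sof w i j).
  move=> i j; have -> : (fun w : 'rV[R]_N => Sof w i j) =
     (fun w => w ord0 (rshift (ni * r) (mxvec_index i j))).
    by apply: boolp.funext => w; rewrite mxE.
  exact: coord_continuous.
have Phic : continuous Phi.
  rewrite /Phi /Fq.
  apply: cont_add; [apply: cont_add|].
  - apply: cont_mul; first exact: cont_cst.
    apply: cont_qn => i j.
    have -> : (fun w : 'rV[R]_N => Rs M U (Vof w) (Sof w) i j) =
      (fun w => \sum_k U i k * Vof w j k + Sof w i j + - M i j).
      by apply: boolp.funext => w; rewrite /Rs !mxE; congr (_ + _ + _);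
         apply: eq_bigr => k _; rewrite mxE.
    apply: cont_add; [apply: cont_add|]; last exact: cont_cst.
      by apply: cont_sum => k; apply: cont_mul; [exact: cont_cst | exact: ceV].
    exact: ceS.
  - apply: cont_mul; first exact: cont_cst.
    apply: cont_add; last exact: cont_cst.
    exact: cont_qn.
  - apply: cont_mul; first exact: cont_cst.
    exact: cont_l1.
have [c cK cmin] := compact_EVT_min Kne Kc (continuous_subspaceT Phic).
exists (Vof c, Sof c) => V' S' /=.
have hc : forall t, K t -> Phi c <= Phi t by move=> t Kt; apply: cmin; exact: mem_set.
have [le0|lt0] := lerP F0 (FF U V' S').
  apply: le_trans le0.
  by have := hc _ K0; rewrite /Phi VofK SofK.
have KV : K (enc V' S').
  have hV := Fq_ge_V U V' S'; have hS := Fq_ge_S U V' S'.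
  have qV : qn V' <= 2 * F0 / rho.
    rewrite ler_pdivlMr //; lra.
  have lS : l1norm S' <= F0 / lam.
    by rewrite ler_pdivlMr // mulrC; apply: le_trans hS _; exact: ltW.
  move=> k /=; rewrite in_itv /= -ler_norml.
  rewrite -(splitK k); case: (fintype.split k) => k' /=; [rewrite row_mxEl | rewrite row_mxEr];
    case: (mxvec_indexP k') => i j; rewrite mxvecE.
  - apply: le_trans (abs_le_sq _) _; rewrite /B -addrA lerD2l.
    apply: le_trans (entry_sq_le_qn V' i j) _; apply: le_trans qV _.
    by rewrite lerDl; apply: divr_ge0 => //; exact: ltW.
  - apply: le_trans (entry_le_l1 S' i j) _; apply: le_trans lS _.
    have : 0 <= 2 * F0 / rho by apply: divr_ge0; [apply: mulr_ge0 | exact: ltW].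
    rewrite /B; lra.
by have := hc _ KV; rewrite /Phi VofK SofK.
Qed.

End Exist.
Section Diff.
Variables (R : realType) (p q : nat).

Definition fip (G : 'M[R]_(p, q)) (H : 'M[R]_(p, q)) : R := frob_inner G H.
Lemma fip_lin G : linear (fip G).
Proof.
move=> a x y; rewrite /fip /frob_inner scaler_sumr -big_split; apply eq_bigr => i _.
rewrite scaler_sumr -big_split; apply eq_bigr => j _ /=; by rewrite !mxE mulrDr mulrCA.
Qed.
HB.instance Definition _ G := GRing.isLinear.Build R _ _ _ (fip G) (fip_lin G).

Lemma fip_cont G : continuous (fip G).
Proof.
apply: cont_sum => i; apply: cont_sum => j; apply: cont_mul; first exact: cont_cst.
exact: coord_continuous.
Qed.

Lemma entry_le_norm (H : 'M[R]_(p, q)) i j : `|H i j| <= `|H|.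
Proof.
rewrite [X in _ <= X]/Num.norm /= mx_normrE.
exact: (le_bigmax _ (fun ij : 'I_p * 'I_q => `|H ij.1 ij.2|) (i, j)).
Qed.

Lemma qn_le_norm (H : 'M[R]_(p, q)) : qn H <= (p * q)%:R * `|H| ^+ 2.
Proof.
rewrite /qn /frob_inner.
apply: le_trans (_ : \sum_(i < p) \sum_(j < q) `|H| ^+ 2 <= _).
  apply: ler_sum => i _; apply: ler_sum => j _.
  rewrite -expr2 -real_normK ?num_real //; apply: lerXn2r; rewrite ?nnegrE //.
  exact: entry_le_norm.
by rewrite sumr_const card_ord sumr_const cardT size_enum_ord -mulrnA mulr_natl mulnC.
Qed.

Lemma grad_of_bound (f : 'M[R]_(p, q) -> R) (U G : 'M[R]_(p, q)) (K : R) : 0 <= K ->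
  (forall H, `|H| <= 1 -> `|f (U + H) - f U - frob_inner G H| <= K * qn H) ->
  is_gradient f U G.
Proof.
move=> K0 hb.
have hL : f \o shift U = cst (f U) + (fip G : 'M[R]_(p, q) -> R) +o_ (0 : 'M[R]_(p, q)) id.
  apply/(@eqaddoP R 'M[R]_(p, q) R 'M[R]_(p, q)) => eps eps0 /=.
  set C := K * (p * q)%:R + 1.
  have C0 : 0 < C by rewrite /C ltr_pwDr // mulr_ge0.
  set d := Num.min 1 (eps / C).
  have d0 : 0 < d by rewrite /d lt_min ltr01 divr_gt0.
  apply: filterS (nbhs0_le d0) => H hH /=.
  have h1 : `|H| <= 1 by apply: le_trans hH _; rewrite /d ge_min lexx.
  have h2 : `|H| <= eps / C by apply: le_trans hH _; rewrite /d ge_min lexx orbT.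
  match goal with |- is_true (`|?X| <= _) =>
    have -> : X = f (H + U) - (f U + fip G H) by [] end.
  rewrite [H + U]addrC opprD addrA.
  apply: le_trans (hb _ h1) _.
  apply: le_trans (_ : K * ((p * q)%:R * `|H| ^+ 2) <= _).
    by apply: ler_wpM2l => //; exact: qn_le_norm.
  have hn := normr_ge0 H.
  rewrite ler_pdivlMr // in h2.
  have hpq : 0 <= (p * q)%:R :> R by [].
  rewrite /C in h2; nra.
have dE : 'd f U = fip G :> (_ -> _) by apply: diff_unique => //; exact: fip_cont.
split.
  apply/diff_locallyP; rewrite dE; split => //; exact: fip_cont.
by move=> H; rewrite dE.
Qed.

End Diff.
Section Main.
Variables (R : realType) (m n ni r : nat) (rho lam : R) (M : 'M[R]_(m, ni)).
Hypotheses (hrho : 0 < rho) (hlam : 0 < lam).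
Local Notation FF := (Fq n rho lam M).
Local Notation c := (cc R n ni).

Lemma minE (U : 'M[R]_(m, r)) V S :
  @is_minimizer R m n ni r rho lam M U V S <-> forall V' S', FF U V S <= FF U V' S'.
Proof.
by split => h V' S'; move: (h V' S'); rewrite ?Lobj_Fq //; rewrite !Lobj_Fq.
Qed.

Lemma gfun_min (U : 'M[R]_(m, r)) V S : (forall V' S', FF U V S <= FF U V' S') ->
  @gfun R m n ni r rho lam M U = FF U V S.
Proof.
move=> h; rewrite /gfun.
set E := (X in inf X).
have EVS : E (FF U V S) by exists (V, S) => //=; rewrite Lobj_Fq.
have lb : lbound E (FF U V S) by move=> y [[V' S'] _ <-] /=; rewrite Lobj_Fq.
apply/eqP; rewrite eq_le; apply/andP; split.
  by apply: ge_inf => //; exists (FF U V S).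
by apply: lb_le_inf => //; exists (FF U V S).
Qed.

Lemma uniq_min (U : 'M[R]_(m, r)) V1 S1 V2 S2 :
  (forall V' S', FF U V1 S1 <= FF U V' S') ->
  (forall V' S', FF U V2 S2 <= FF U V' S') -> V1 = V2 /\ S1 = S2.
Proof.
move=> h1 h2.
have sc := Fq_sc n rho M hlam U V1 S1 V2 S2.
have a1 := h1 (2^-1 *: (V1 + V2)) (2^-1 *: (S1 + S2)).
have a2 := h1 V2 S2; have a3 := h2 V1 S1.
have q1 := qn_ge0 (Rs M U V1 S1 - Rs M U V2 S2); have q2 := qn_ge0 (V1 - V2).
have hq2 : rho / 4 * qn (V1 - V2) = 0.
  apply/eqP; rewrite eq_le; apply/andP; split; last first.
    by apply: mulr_ge0 => //; apply: divr_ge0 => //; exact: ltW.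
  have : 0 <= 4^-1 * qn (Rs M U V1 S1 - Rs M U V2 S2) by apply: mulr_ge0.
  lra.
have eV : V1 = V2.
  apply/eqP; rewrite -subr_eq0; apply/eqP; apply: qn_eq0.
  move/eqP: hq2; rewrite mulf_eq0 => /orP [|/eqP //].
  by rewrite mulf_eq0 invr_eq0 (gt_eqF hrho) pnatr_eq0.
subst V2; split => //.
have hq1 : 4^-1 * qn (Rs M U V1 S1 - Rs M U V1 S2) = 0.
  apply/eqP; rewrite eq_le; apply/andP; split; last by apply: mulr_ge0.
  have : 0 <= rho / 4 * qn (V1 - V1) by apply: mulr_ge0 => //; apply: divr_ge0 => //; exact: ltW.
  lra.
have eR : Rs M U V1 S1 - Rs M U V1 S2 = S1 - S2.
  rewrite /Rs; move: (U *m V1^T) => P.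
  by apply/matrixP => i j; rewrite !mxE; ring.
move/eqP: hq1; rewrite mulf_eq0 invr_eq0 pnatr_eq0 /= eR => /eqP h.
by apply/eqP; rewrite -subr_eq0; apply/eqP; apply: qn_eq0.
Qed.

Lemma qn_le_mr (H : 'M[R]_(m, r)) : `|H| <= 1 -> qn H <= (m * r)%:R.
Proof.
move=> hH; apply: le_trans (qn_le_norm H) _.
have x2 : `|H| ^+ 2 <= 1 by apply: exprn_ile1.
by rewrite -[X in _ <= X]mulr1; apply: ler_wpM2l.
Qed.

Lemma KV_bound (U : 'M[R]_(m, r)) (Vs : 'M[R]_(ni, r)) (Ss : 'M[R]_(m, ni)) : exists2 KV, 0 <= KV &
  forall H V' S', `|H| <= 1 -> (forall V'' S'', FF (U + H) V' S' <= FF (U + H) V'' S'') ->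
  qn V' <= KV.
Proof.
set G := Gr n rho M U Vs Ss.
set mr : R := (m * r)%:R.
set X := FF U Vs Ss + (qn G + mr) / 2 + qn Vs * mr / 2 + rho * c / 2 * mr.
have c0 := cc_ge0 R n ni.
have mr0 : 0 <= mr by [].
have X0 : 0 <= X.
  have := Fq_ge0 n M hrho hlam U Vs Ss; have := qn_ge0 G; have := qn_ge0 Vs.
  have : 0 <= qn Vs * mr by apply: mulr_ge0 => //; exact: qn_ge0.
  have : 0 <= rho * c * mr by apply: mulr_ge0 => //; apply: mulr_ge0 => //; exact: ltW.
  rewrite /X; lra.
exists (2 * X / rho); first by apply: divr_ge0; [lra | exact: ltW].
move=> H V' S' hH hm.
have hV := Fq_ge_V n M hrho hlam (U + H) V' S'.
have m2 := hm Vs Ss.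
have E2 := Fq_expand n rho lam M U H Vs Ss.
have y := young G H (a:=2^-1) (ltac:(by rewrite invr_gt0)).
have e4 : qn H / (4 * 2^-1) = qn H / 2 by field.
rewrite e4 in y.
move: y; rewrite ler_norml => /andP [_ y].
have h := qn_le_mr hH.
have t3 : qn (H *m Vs^T) <= qn Vs * mr.
  apply: le_trans (qnM _ _) _; rewrite qn_tr mulrC; apply: ler_wpM2l => //; exact: qn_ge0.
have t4 : rho * c / 2 * qn H <= rho * c / 2 * mr.
  by apply: ler_wpM2l => //; apply: divr_ge0 => //; apply: mulr_ge0 => //; exact: ltW.
rewrite ler_pdivlMr //.
rewrite /X; move: E2 m2 hV y t3 t4 h; rewrite -/G.
lra.
Qed.

Lemma grad_L (U : 'M[R]_(m, r)) (Vs : 'M[R]_(ni, r)) (Ss : 'M[R]_(m, ni)) :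
  is_gradient (fun U' => @Lobj R m n ni r rho lam M U' Vs Ss) U (Gr n rho M U Vs Ss).
Proof.
have c0 := cc_ge0 R n ni.
apply: (@grad_of_bound _ _ _ _ _ _ (qn Vs / 2 + rho * c / 2)).
  apply: addr_ge0; first by apply: divr_ge0 => //; exact: qn_ge0.
  by apply: divr_ge0 => //; apply: mulr_ge0 => //; exact: ltW.
move=> H hH; rewrite !Lobj_Fq Fq_expand.
have t3 : qn (H *m Vs^T) <= qn H * qn Vs by apply: le_trans (qnM _ _) _; rewrite qn_tr.
have t5 : 0 <= qn (H *m Vs^T) by exact: qn_ge0.
have t6 : 0 <= rho * c / 2 * qn H.
  by apply: mulr_ge0; [apply: divr_ge0 => //; apply: mulr_ge0 => //; exact: ltW | exact: qn_ge0].
rewrite ler_norml; apply/andP; split; lra.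
Qed.

Lemma grad_g (U : 'M[R]_(m, r)) (Vs : 'M[R]_(ni, r)) (Ss : 'M[R]_(m, ni)) :
  (forall V' S', FF U Vs Ss <= FF U V' S') ->
  is_gradient (@gfun R m n ni r rho lam M) U (Gr n rho M U Vs Ss).
Proof.
move=> hmin.
have c0 := cc_ge0 R n ni.
have [KV KV0 hKV] := KV_bound U Vs Ss.
set G := Gr n rho M U Vs Ss.
set Rst := Rs M U Vs Ss.
set K := qn Vs / 2 + rho * c / 2 + 2 * KV + 2 / rho * qn Rst.
have K0 : 0 <= K.
  have := qn_ge0 Vs; have := qn_ge0 Rst.
  have : 0 <= rho * c by apply: mulr_ge0 => //; exact: ltW.
  have : 0 <= 2 / rho * qn Rst by apply: mulr_ge0; [apply: divr_ge0 => //; exact: ltW | exact: qn_ge0].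
  rewrite /K; lra.
apply: (grad_of_bound K0) => H hH.
have [[V' S'] /= hm] := exists_min n M hrho hlam (U + H).
rewrite (gfun_min hm) (gfun_min hmin).
have hv := hKV H V' S' hH hm.
set h := qn H.
have h0 : 0 <= h by exact: qn_ge0.
have E1 := Fq_expand n rho lam M U H V' S'.
have E2 := Fq_expand n rho lam M U H Vs Ss.
have m1 := hmin V' S'.
have m2 := hm Vs Ss.
have m3 := hmin (2^-1 *: (V' + Vs)) (2^-1 *: (S' + Ss)).
have sc := Fq_sc n rho M hlam U V' S' Vs Ss.
set dR := Rs M U V' S' - Rst.
set dV := V' - Vs.
have eD : frob_inner (Gr n rho M U V' S') H - frob_inner G H =
   frob_inner dR (H *m V'^T) + frob_inner dV (Rst^T *m H).
  rewrite -ipM_r -ipM_l -ipDl /dR /dV mulmxBl mulmxBr /G /Gr.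
  rewrite (ipDl (Rs M U V' S' *m V')) (ipDl (Rs M U Vs Ss *m Vs)).
  have -> : Rs M U V' S' *m V' - Rst *m V' + (Rst *m V' - Rst *m Vs) =
            Rs M U V' S' *m V' - Rst *m Vs by rewrite addrA subrK.
  rewrite ipBl /Rst; ring.
have y1 := young dR (H *m V'^T) (a:=8^-1) (ltac:(by rewrite invr_gt0)).
have y2 := young dV (Rst^T *m H) (a:=rho / 8) (ltac:(by rewrite divr_gt0)).
have e1 : qn (H *m V'^T) / (4 * 8^-1) = 2 * qn (H *m V'^T) by field.
have e2 : qn (Rst^T *m H) / (4 * (rho / 8)) = 2 / rho * qn (Rst^T *m H).
  by field; rewrite lt0r_neq0.
rewrite e1 in y1; rewrite e2 in y2.
move: y1 y2; rewrite !ler_norml => /andP [y1 _] /andP [y2 _].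
have t1 : qn (H *m V'^T) <= h * KV.
  apply: le_trans (qnM _ _) _; rewrite qn_tr; apply: ler_wpM2l => //.
have t2 : 2 / rho * qn (Rst^T *m H) <= 2 / rho * (qn Rst * h).
  apply: ler_wpM2l; first by apply: divr_ge0 => //; exact: ltW.
  by apply: le_trans (qnM _ _) _; rewrite qn_tr.
have t3 : qn (H *m Vs^T) <= h * qn Vs by apply: le_trans (qnM _ _) _; rewrite qn_tr.
have t5 : 0 <= qn (H *m V'^T) by exact: qn_ge0.
have t6 : 0 <= rho * c / 2 * h.
  by apply: mulr_ge0 => //; apply: divr_ge0 => //; apply: mulr_ge0 => //; exact: ltW.
have qa := qn_ge0 dR; have qb := qn_ge0 dV.
have qb' : 0 <= rho * qn dV by apply: mulr_ge0 => //; exact: ltW.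
have qvh : 0 <= qn Vs * h by apply: mulr_ge0 => //; exact: qn_ge0.
have hkv : 0 <= h * KV by apply: mulr_ge0.
have hrh : 0 <= 2 / rho * (qn Rst * h).
  by apply: mulr_ge0; [apply: divr_ge0 => //; exact: ltW | apply: mulr_ge0 => //; exact: qn_ge0].
rewrite /K; apply/andP; split.
  move: E1 E2 m1 m2 m3 sc eD y1 y2 t1 t2 t3 t5 t6; rewrite -/G -/Rst -/dR -/dV -/h.
  lra.
move: E1 E2 m1 m2 m3 sc eD y1 y2 t1 t2 t3 t5 t6; rewrite -/G -/Rst -/dR -/dV -/h.
lra.
Qed.

End Main.

Theorem lemma2 (R : realType) (m n ni r : nat)
  (hm : (0 < m)%N) (hn : (0 < n)%N) (hni : (0 < ni)%N) (hr : (0 < r)%N)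
  (hnin : (ni <= n)%N)
  (rho lam : R) (hrho : 0 < rho) (hlam : 0 < lam)
  (M : 'M[R]_(m, ni))
  (CU CV CS CM : R)
  (hM : frob M <= CM)
  (hminb : forall (U : 'M[R]_(m, r)) (V : 'M[R]_(ni, r)) (S : 'M[R]_(m, ni)),
      frob U <= CU -> @is_minimizer R m n ni r rho lam M U V S ->
      frob V <= CV /\ frob S <= CS)
  (U : 'M[R]_(m, r)) (hU : frob U <= CU) :
  (exists VS : 'M[R]_(ni, r) * 'M[R]_(m, ni),
      @is_minimizer R m n ni r rho lam M U VS.1 VS.2) /\
  (forall (V1 V2 : 'M[R]_(ni, r)) (S1 S2 : 'M[R]_(m, ni)),
      @is_minimizer R m n ni r rho lam M U V1 S1 ->
      @is_minimizer R m n ni r rho lam M U V2 S2 -> V1 = V2 /\ S1 = S2) /\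
  differentiable (@gfun R m n ni r rho lam M) U /\
  (forall (Vs : 'M[R]_(ni, r)) (Ss : 'M[R]_(m, ni)),
      @is_minimizer R m n ni r rho lam M U Vs Ss ->
      exists G : 'M[R]_(m, r),
        is_gradient (@gfun R m n ni r rho lam M) U G /\
        is_gradient (fun U' => @Lobj R m n ni r rho lam M U' Vs Ss) U G).
Proof.
have [[V0 S0] /= h0] := exists_min n M hrho hlam U.
split; first by exists (V0, S0); apply/minE.
split.
  by move=> V1 V2 S1 S2 /minE h1 /minE h2; exact: (uniq_min hrho hlam h1 h2).
split; first by have [] := grad_g hrho hlam h0.
move=> Vs Ss /minE hs; exists (Gr n rho M U Vs Ss); split.
  exact: grad_g.
exact: grad_L.
Qed.
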